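(* Let $k<l$ be positive integers and let $\gamma\in U(k,l)$ be diagonalizable with all eigenvalues of modulus $1$. Then $\gamma$ has an eigenvector in $N_-^{k,l}\cup N_+^{k,l}$.
   Context: $\prec u,v\succ_{k,l}=-\sum_{j=1}^k u_j\bar v_j+\sum_{j=k+1}^{k+l}u_j\bar v_j$ on $\mathbb{C}^{k+l}$; $N_-^{k,l}$, $N_+^{k,l}$ are the sets of vectors $v$ with $\prec v,v\succ_{k,l}<0$, respectively $>0$; $U(k,l)$ is the group of matrices in $GL(k+l,\mathbb{C})$ preserving the form. *)

(* Defs.v *)
From HB Require Import structures.
From mathcomp Require Import all_boot all_order all_algebra.
From mathcomp Require Import complex.
From mathcomp Require Import reals.
Set Implicit Arguments. Unset Strict Implicit. Unset Printing Implicit Defensive.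
Import Order.TTheory GRing.Theory Num.Theory.
Local Open Scope ring_scope.

Definition hform (C : numClosedFieldType) (k l : nat) (u v : 'cV[C]_(k + l)) : C :=
  \sum_(j < k + l) (if (j < k)%N then -1 else 1) * u j 0 * (v j 0)^*.

Definition Nminus (C : numClosedFieldType) (k l : nat) (v : 'cV[C]_(k + l)) : Prop :=
  hform v v < 0.
Definition Nplus (C : numClosedFieldType) (k l : nat) (v : 'cV[C]_(k + l)) : Prop :=
  0 < hform v v.

Definition in_U (C : numClosedFieldType) (k l : nat) (g : 'M[C]_(k + l)) : Prop :=
  g \in unitmx /\ forall u v : 'cV[C]_(k + l), hform (g *m u) (g *m v) = hform u v.

Definition eigenvector_of (C : fieldType) (n : nat) (g : 'M[C]_n) (v : 'cV[C]_n) : Prop :=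
  v != 0 /\ exists a : C, g *m v = a *: v.

(* Main.v *)
Require Import Defs.
From HB Require Import structures.
From mathcomp Require Import all_boot all_order all_algebra.
From mathcomp Require Import complex.
From mathcomp Require Import reals.
From mathcomp Require Import ring.
From Stdlib Require Import Classical.
Import Order.TTheory GRing.Theory Num.Theory.
Local Open Scope ring_scope.

Section H.
Variable C : numClosedFieldType.
Variables k l : nat.
Local Notation V := 'cV[C]_(k + l).

Lemma hformZl a (u v : V) : hform (a *: u) v = a * hform u v.
Proof.
rewrite /hform mulr_sumr; apply: eq_bigr => j _; rewrite mxE; ring.
Qed.

Lemma hformZr a (u v : V) : hform u (a *: v) = a^* * hform u v.
Proof.
rewrite /hform mulr_sumr; apply: eq_bigr => j _; by rewrite mxE rmorphM /= mulrCA.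
Qed.

Lemma hformDl (u w v : V) : hform (u + w) v = hform u v + hform w v.
Proof.
rewrite /hform -big_split; apply: eq_bigr => j _; by rewrite mxE mulrDr mulrDl.
Qed.

Lemma hformDr (u w v : V) : hform v (u + w) = hform v u + hform v w.
Proof.
rewrite /hform -big_split; apply: eq_bigr => j _; by rewrite mxE rmorphD /= mulrDr.
Qed.

Lemma hform0l (v : V) : hform 0 v = 0.
Proof. by rewrite -(scale0r 0) hformZl mul0r. Qed.

Lemma hform0r (v : V) : hform v 0 = 0.
Proof. by rewrite -(scale0r 0) hformZr rmorph0 mul0r. Qed.

Lemma hform_real (v : V) : hform v v \is Num.real.
Proof.
apply: rpred_sum => j _; rewrite -mulrA; apply: rpredM.
  by case: ifP => _; rewrite ?rpredN rpred1.
exact/ger0_real/mul_conjC_ge0.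
Qed.

Lemma hform_mull (Q : 'M[C]_(k + l)) (c u : V) :
  hform (Q *m c) u = \sum_i c i 0 * hform (col i Q) u.
Proof.
rewrite /hform.
under [RHS]eq_bigr do rewrite mulr_sumr.
rewrite [RHS]exchange_big /=; apply: eq_bigr => j _.
rewrite mxE mulr_sumr mulr_suml; apply: eq_bigr => i _; rewrite !mxE; ring.
Qed.

Lemma hform_sym (u v : V) : hform u v = (hform v u)^*.
Proof.
rewrite /hform rmorph_sum; apply: eq_bigr => j _.
rewrite !rmorphM /= conjCK; case: ifP => _; rewrite ?rmorphN rmorph1; ring.
Qed.

Lemma hform_mulr (Q : 'M[C]_(k + l)) (c u : V) :
  hform u (Q *m c) = \sum_i (c i 0)^* * hform u (col i Q).
Proof.
rewrite hform_sym hform_mull rmorph_sum; apply: eq_bigr => i _.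
by rewrite rmorphM /= -hform_sym.
Qed.
End H.

Lemma helper_pq (C : numClosedFieldType) (p q : C) :
  p + q = 0 -> 'i^* * p + 'i * q = 0 -> p = 0.
Proof.
move=> h1 h2; have eq : q = - p by apply/eqP; rewrite -addr_eq0 addrC h1.
move: h2; rewrite eq conjCi => h2.
have : 'i * p *+ 2 = 0 by rewrite -[LHS]opprK -[RHS]oppr0 -h2; ring.
move/eqP; rewrite -mulr_natr !mulf_eq0 (negbTE (neq0Ci _)) pnatr_eq0 /= orbF.
by move/eqP.
Qed.

Theorem mainTheorem16 (R : realType) (k l : nat) (g : 'M[R[i]]_(k + l)) :
  (0 < k)%N -> (k < l)%N ->
  in_U g ->
  diagonalizable g ->
  (forall a : R[i], (exists2 v : 'cV[R[i]]_(k + l), v != 0 & g *m v = a *: v) -> `|a| = 1) ->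
  exists v : 'cV[R[i]]_(k + l), eigenvector_of g v /\ (Nminus v \/ Nplus v).
Proof.
move=> k0 kl [gU gpres] [P Pu Pd] Hmod.
have /is_diag_mxP Dd : is_diag_mx (P *m g *m invmx P) by rewrite -conjumx.
set D := P *m g *m invmx P in Dd.
set Q := invmx P.
have gQ : g *m Q = Q *m D by rewrite /D /Q !mulmxA mulVmx // mul1mx.
have eig i : g *m col i Q = D i i *: col i Q.
  have -> : g *m col i Q = col i (Q *m D) by rewrite !colE mulmxA gQ.
  apply/matrixP => j z; rewrite (ord1 z) !mxE (bigD1 i) //= big1 ?addr0.
    by rewrite mulrC; congr (_ * _); rewrite /D mxE.
  by move=> i' ni; rewrite Dd ?mulr0.
apply: NNPP => Hn.
have Hnull (x : 'cV[R[i]]_(k + l)) (a : R[i]) : x != 0 -> g *m x = a *: x -> hform x x = 0.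
  move=> xn gx; have [//|hn] := eqVneq (hform x x) 0; exfalso; apply: Hn; exists x.
  split; first by split=> //; exists a.
  move: hn; rewrite (real_neqr_lt (@hform_real _ _ _ x) (rpred0 _)) => /orP [h|h].
    by left. by right.
have orth (v w : 'cV[R[i]]_(k + l)) (a b : R[i]) : g *m v = a *: v -> g *m w = b *: w -> hform v w = 0.
  move=> gv gw.
  have [->|vn] := eqVneq v 0; first exact: hform0l.
  have [->|wn] := eqVneq w 0; first exact: hform0r.
  have ha := Hmod a (ex_intro2 _ _ v vn gv).
  have hb := Hmod b (ex_intro2 _ _ w wn gw).
  have [eab|ab] := eqVneq a b.
    subst b.
    have N x : g *m x = a *: x -> hform x x = 0.
      by have [->|xn] := eqVneq x 0; [rewrite hform0l | exact: Hnull].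
    have h1 : hform (v + w) (v + w) = 0 by apply: N; rewrite mulmxDr gv gw scalerDr.
    have h2 : hform (v + 'i *: w) (v + 'i *: w) = 0 by apply: N; rewrite mulmxDr -scalemxAr gw gv scalerDr !scalerA mulrC.
    move: h1 h2; rewrite !hformDl !hformDr !hformZl !hformZr (N v gv) (N w gw).
    rewrite !mulr0 !addr0 !add0r => h1 h2.
    exact: helper_pq h1 h2.
  have := gpres v w; rewrite gv gw hformZl hformZr mulrA => e.
  have : (a * b^* - 1) * hform v w = 0 by rewrite mulrBl e mul1r subrr.
  move/eqP; rewrite mulf_eq0 => /orP [|/eqP //].
  rewrite subr_eq0 => /eqP abu; move/eqP: ab; apply: absurd.
  have : a * (b^* * b) = b by rewrite mulrA abu mul1r.
  by rewrite -normCKC hb expr1n mulr1.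
have kn : (k < k + l)%N by rewrite -{1}(addn0 k) ltn_add2l (leq_ltn_trans _ kl).
pose e : 'cV[R[i]]_(k + l) := delta_mx (Ordinal kn) 0.
have he : hform e e = 1.
  rewrite /hform (bigD1 (Ordinal kn)) //= !mxE !eqxx /= ltnn conjC1 !mulr1.
  rewrite big1 ?addr0 // => j /negbTE nj; rewrite !mxE nj /= mulr0 mul0r //.
have : hform e e = 0.
  rewrite -(mulKmx Pu e) -/Q hform_mull big1 // => i _.
  rewrite hform_mulr big1 ?mulr0 // => j _.
  by rewrite (orth _ _ _ _ (eig i) (eig j)) mulr0.
by rewrite he => /eqP; rewrite oner_eq0.
Qed.
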